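(* Fix $q\in Q$, $a\in A$ and $k$, write $\epsilon:=\varepsilon^s$, and consider $$G(\lambda,\mu):=\sum_{j\in\overline{\mathcal N}^{q,a}}\min\big\{\underline P(q,a,q_j)(h_j(\mu)-\lambda),\ \overline P(q,a,q_j)(h_j(\mu)-\lambda)\big\}-\mu\epsilon+\lambda,$$ $$h_j(\mu):=\min_{i\in\overline{\mathcal N}^{q,a}_W}\{\underline p^k(q_i)+\mu\,c(q_i,q_j)\},$$ for $\lambda\in\mathbb R$, $\mu\ge0$. Then $G$ is concave, the optimal value of $\max_{\mu\ge0,\lambda\in\mathbb R}G(\lambda,\mu)$ equals the optimal value of the linear program (LP) below, and for every $\mu\ge0$, $$\max_{\lambda\in\mathbb R}G(\lambda,\mu)=\max_{j\in\overline{\mathcal N}^{q,a}}G(h_j(\mu),\mu).$$ The linear program (LP) is: minimize $\sum_{i\in\overline{\mathcal N}^{q,a}_W}\gamma_i\underline p^k(q_i)$ over $\gamma_i,\widehat\gamma_j,\pi_{ij}$ subject to $\underline P(q,a,q_j)\le\widehat\gamma_j\le\overline P(q,a,q_j)$ ($j\in\overline{\mathcal N}^{q,a}$), $\sum_{j}\widehat\gamma_j=1$, $\pi_{ij}\ge0$, $\sum_{i\in\overline{\mathcal N}^{q,a}_W}\pi_{ij}=\widehat\gamma_j$ ($j\in\overline{\mathcal N}^{q,a}$), $\sum_{j\in\overline{\mathcal N}^{q,a}}\pi_{ij}=\gamma_i$ ($i\in\overline{\mathcal N}^{q,a}_W$), and $\sum_{i,j}\pi_{ij}c(q_i,q_j)\le\epsilon$,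 where $i$ ranges over $\overline{\mathcal N}^{q,a}_W$ and $j$ over $\overline{\mathcal N}^{q,a}$.
   Context: Fix $n\ge1$, $s\ge1$, $\varepsilon\ge0$, a finite mode set $U=\{1,\dots,m\}$, continuous $f_u:\mathbb R^n\to\mathbb R^n$, a nominal Borel probability $\widehat p_v$ on $\mathbb R^n$ with finite $s$-th moment, and a set $W\subseteq\mathbb R^n$ (containing the support of the true noise distribution). Let $T^u_{p_v}(B\mid x):=p_v(\{v:f_u(x)+v\in B\})$. Abstraction. $X\subset\mathbb R^n$ bounded Borel, $X_{\rm tgt}\subset X$; $Q_{\rm safe}$ a finite family of pairwise disjoint Borel sets with union $X$, each either contained in or disjoint from $X_{\rm tgt}$; $Q_{\rm tgt}$ those contained in $X_{\rm tgt}$; $q_u:=\mathbb R^n\setminus X$; $Q:=Q_{\rm safe}\cup\{q_u\}=\{q_1,\dots,q_N\}$ indexed by $\mathcal N=\{1,\dots,N\}$; $A:=U$. Bounds $\underline P\le\overline P$ in $[0,1]$ on $Q\times A\times Q$ with $\sum_{q'}\underline P(q,a,q')\le1\le\sum_{q'}\overline P(q,a,q')$, $\underline P(q,a,q')\le\inf_{x\in q}T^a_{\widehat p_v}(q'\mid x)$, $\overline P(q,a,q')\ge\sup_{x\in q}T^a_{\widehat p_v}(q'\mid x)$ for $q\in Q_{\rm safe}$, and $\underline P(q_u,a,q_u)=\overline P(q_u,a,q_u)=1$. Cost $c(q,q'):=\inf\{\|x-y\|^s:x\in q,y\in q'\}$ (Euclidean norm). Index sets: $\overline{\mathcal N}^{q,a}:=\{i:\overline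 P(q,a,q_i)>0\}$ and $\overline{\mathcal N}^{q,a}_W:=\{i:(f_a(q)+W)\cap q_i\ne\emptyset\}$, with $f_a(q)$ the image of $q$ under $f_a$; it is assumed that $\overline{\mathcal N}^{q,a}\subseteq\overline{\mathcal N}^{q,a}_W$ (the nominal distribution is supported in $W$). $\underline p^k:Q\to[0,1]$ is the $k$-th iterate of the robust dynamic programming recursion: $\underline p^0=\mathbf 1_{Q_{\rm tgt}}$, $\underline p^{k+1}(q)=1$ on $Q_{\rm tgt}$ and otherwise $\max_{a}\min_{\gamma\in\Gamma_{q,a}}\sum_{q'}\gamma(q')\underline p^k(q')$ (for the purposes of the claim only $\underline p^k\ge0$ matters). *)

(* Defs.v *)
From HB Require Import structures.
From mathcomp Require Import all_boot all_order all_algebra.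
From mathcomp Require Import all_classical all_reals all_analysis.
Set Implicit Arguments. Unset Strict Implicit. Unset Printing Implicit Defensive.
Import Order.TTheory GRing.Theory Num.Theory numFieldNormedType.Exports.
Local Open Scope classical_set_scope.
Local Open Scope ring_scope.

Definition enorm (R : realType) (n : nat) (x : 'rV[R]_n) : R :=
  Num.sqrt (\sum_(i < n) x ord0 i ^+ 2).

Definition setcost (R : realType) (n : nat) (s : R) (A B : set 'rV[R]_n) : R :=
  inf [set r | exists x y, A x /\ B y /\ r = (enorm (x - y)) `^ s].

Definition Nbar (R : realType) (N m : nat) (Pu : 'I_N -> 'I_m -> 'I_N -> R)
  (q : 'I_N) (a : 'I_m) : {set 'I_N} := [set j | 0 < Pu q a j].

Definition NbarW (R : realType) (n N m : nat) (Qs : 'I_N -> set 'rV[R]_n)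
  (f : 'I_m -> 'rV[R]_n -> 'rV[R]_n) (W : set 'rV[R]_n)
  (q : 'I_N) (a : 'I_m) : {set 'I_N} :=
  [set i | `[< exists x w, Qs q x /\ W w /\ Qs i (f a x + w) >]].

(* minimum of F over a finite set A (taken as an infimum; A is nonempty
   wherever it is used) *)
Definition finmin (R : realType) (T : finType) (A : {set T}) (F : T -> R) : R :=
  inf (F @` [set x | x \in A]).

Definition hfun (R : realType) (n N : nat) (Qs : 'I_N -> set 'rV[R]_n) (s : R)
  (p : 'I_N -> R) (I : {set 'I_N}) (j : 'I_N) (mu : R) : R :=
  finmin I (fun i => p i + mu * setcost s (Qs i) (Qs j)).

Definition Gfun (R : realType) (n N m : nat) (Qs : 'I_N -> set 'rV[R]_n)
  (f : 'I_m -> 'rV[R]_n -> 'rV[R]_n) (W : set 'rV[R]_n) (s eps : R)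
  (Pl Pu : 'I_N -> 'I_m -> 'I_N -> R) (p : 'I_N -> R) (q : 'I_N) (a : 'I_m)
  (lam mu : R) : R :=
  let J := Nbar Pu q a in
  let I := NbarW Qs f W q a in
  \sum_(j in J) Num.min (Pl q a j * (hfun Qs s p I j mu - lam))
                        (Pu q a j * (hfun Qs s p I j mu - lam))
  - mu * eps `^ s + lam.

Definition LPfeasible (R : realType) (n N m : nat) (Qs : 'I_N -> set 'rV[R]_n)
  (f : 'I_m -> 'rV[R]_n -> 'rV[R]_n) (W : set 'rV[R]_n) (s eps : R)
  (Pl Pu : 'I_N -> 'I_m -> 'I_N -> R) (q : 'I_N) (a : 'I_m)
  (gam gamh : 'I_N -> R) (pi : 'I_N -> 'I_N -> R) : Prop :=
  let J := Nbar Pu q a in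
  let I := NbarW Qs f W q a in
  (forall j, j \in J -> Pl q a j <= gamh j <= Pu q a j) /\
  \sum_(j in J) gamh j = 1 /\
  (forall i j, i \in I -> j \in J -> 0 <= pi i j) /\
  (forall j, j \in J -> \sum_(i in I) pi i j = gamh j) /\
  (forall i, i \in I -> \sum_(j in J) pi i j = gam i) /\
  \sum_(i in I) \sum_(j in J) pi i j * setcost s (Qs i) (Qs j) <= eps `^ s.

Definition LPobj (R : realType) (n N m : nat) (Qs : 'I_N -> set 'rV[R]_n)
  (f : 'I_m -> 'rV[R]_n -> 'rV[R]_n) (W : set 'rV[R]_n)
  (p : 'I_N -> R) (q : 'I_N) (a : 'I_m) (gam : 'I_N -> R) : R :=
  \sum_(i in NbarW Qs f W q a) gam i * p i.

(* Main.v *)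
Require Import Defs.
From HB Require Import structures.
From mathcomp Require Import all_boot all_order all_algebra.
From mathcomp Require Import all_classical all_reals all_analysis.
From mathcomp Require Import ring lra.
Import Order.TTheory GRing.Theory Num.Theory numFieldNormedType.Exports.
Local Open Scope classical_set_scope.
Local Open Scope ring_scope.
Set Implicit Arguments. Unset Strict Implicit. Unset Printing Implicit Defensive.

Lemma exists_argmin (R : realType) (T : finType) (A : {set T}) (F : T -> R) :
  (exists i0, i0 \in A) -> exists2 i, i \in A & forall k, k \in A -> F i <= F k.
Proof.
case=> i0 Hi0.
case: (arg_minP F Hi0) => i Hi Hmin.
by exists i.
Qed.

Lemma exists_argmax (R : realType) (T : finType) (A : {set T}) (F : T -> R) :
  (exists i0, i0 \in A) -> exists2 i, i \in A & forall k, k \in A -> F k <= F i.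
Proof.
move=> /(exists_argmin (fun x => - F x))[i Hi H]; exists i => // k /H.
by rewrite lerN2.
Qed.

Lemma finminP (R : realType) (T : finType) (A : {set T}) (F : T -> R) :
  (exists i0, i0 \in A) -> exists2 i, i \in A &
    finmin A F = F i /\ forall k, k \in A -> F i <= F k.
Proof.
move=> /(exists_argmin F)[i Hi H]; exists i => //; split => //.
rewrite /finmin; apply/le_anti/andP; split.
- apply: ge_inf; last by exists i.
  by exists (F i) => _ [k /= Hk <-]; exact: H.
- apply: lb_le_inf; first by exists (F i), i.
  by move=> _ [k /= Hk <-]; exact: H.
Qed.

Lemma finmin_le (R : realType) (T : finType) (A : {set T}) (F : T -> R) k :
  k \in A -> finmin A F <= F k.
Proof.
move=> Hk; have: exists i0, i0 \in A by exists k.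
by case/(finminP F)=> i Hi [-> H]; exact: H.
Qed.

Lemma setcost_ge0 (R : realType) (n : nat) (s : R) (A B : set 'rV[R]_n) :
  0 <= setcost s A B.
Proof.
rewrite /setcost.
set S := [set r | _].
case: (pselect (S !=set0)) => [HS|HS].
  by apply: lb_le_inf => // _ [x [y [_ [_ ->]]]]; exact: powR_ge0.
have -> : S = set0.
  by apply/seteqP; split => // r Sr; apply: HS; exists r.
by rewrite inf0.
Qed.

Lemma setcost_diag (R : realType) (n : nat) (s : R) (A : set 'rV[R]_n) :
  s != 0 -> setcost s A A = 0.
Proof.
move=> s0; apply/le_anti/andP; split; last exact: setcost_ge0.
rewrite /setcost.
set S := [set r | _].
case: (pselect (A !=set0)) => [[x Ax]|HA].
  apply: ge_inf.
    by exists 0 => _ [x' [y [_ [_ ->]]]]; exact: powR_ge0.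
  exists x, x; split => //; split => //.
  rewrite subrr /enorm.
  rewrite big1 ?sqrtr0 ?powR0 // => i _.
  by rewrite mxE expr0n.
have -> : S = set0.
  by apply/seteqP; split => // r [x [y [Ax _]]]; apply: HA; exists x.
by rewrite inf0.
Qed.

Section Abs.
Variables (R : realType) (N : nat) (I J : {set 'I_N}) (c : 'I_N -> 'I_N -> R)
  (p Pl Pu : 'I_N -> R) (E : R).
Hypothesis HJI : {subset J <= I}.
Hypothesis HJ0 : exists j0, j0 \in J.
Hypothesis Hc0 : forall i j, 0 <= c i j.
Hypothesis Hcd : forall j, c j j = 0.
Hypothesis Hp0 : forall i, 0 <= p i.
Hypothesis HPl0 : forall j, 0 <= Pl j.
Hypothesis HPlu : forall j, Pl j <= Pu j.
Hypothesis HsPl : \sum_(j in J) Pl j <= 1.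
Hypothesis HsPu : 1 <= \sum_(j in J) Pu j.
Hypothesis HE : 0 <= E.

Definition hh j mu := finmin I (fun i => p i + mu * c i j).
Definition gm j y := Num.min (Pl j * y) (Pu j * y).
Definition GG lam mu := \sum_(j in J) gm j (hh j mu - lam) - mu * E + lam.

Lemma HI0 : exists i0, i0 \in I.
Proof. by case: HJ0 => j Hj; exists j; exact: HJI. Qed.

Lemma hh_le j mu i : i \in I -> hh j mu <= p i + mu * c i j.
Proof. exact: finmin_le. Qed.

Lemma hh_attained j mu : exists2 i, i \in I & hh j mu = p i + mu * c i j.
Proof. by case: (finminP (fun i => p i + mu * c i j) HI0) => i Hi [H _]; exists i. Qed.

Lemma gm_ge j y g : Pl j <= g -> g <= Pu j -> gm j y <= g * y.
Proof.
move=> H1 H2; rewrite /gm ge_min; case: (leP 0 y) => Hy; apply/orP.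
  by left; rewrite ler_wpM2r.
by right; rewrite ler_wnM2r // ltW.
Qed.

Lemma gm_pos j y : 0 <= y -> gm j y = Pl j * y.
Proof. by move=> Hy; rewrite /gm min_l // ler_wpM2r. Qed.

Lemma gm_neg j y : y <= 0 -> gm j y = Pu j * y.
Proof. by move=> Hy; rewrite /gm min_r // ler_wnM2r. Qed.

Lemma gm_mono j y1 y2 : y1 <= y2 -> gm j y1 <= gm j y2.
Proof.
move=> Hy; rewrite /gm le_min; apply/andP; split; rewrite ge_min; apply/orP.
  by left; rewrite ler_wpM2l.
by right; rewrite ler_wpM2l // (le_trans (HPl0 j)).
Qed.

Lemma gm_concave j y1 y2 t : 0 <= t <= 1 ->
  t * gm j y1 + (1 - t) * gm j y2 <= gm j (t * y1 + (1 - t) * y2).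
Proof.
case/andP=> t0 t1; have t1' : 0 <= 1 - t by rewrite subr_ge0.
rewrite {3}/gm le_min; apply/andP; split.
- apply: (@le_trans _ _ (t * (Pl j * y1) + (1 - t) * (Pl j * y2))).
    by apply: lerD; apply: ler_wpM2l => //; rewrite /gm ge_min lexx.
  by rewrite le_eqVlt; apply/orP; left; apply/eqP; ring.
- apply: (@le_trans _ _ (t * (Pu j * y1) + (1 - t) * (Pu j * y2))).
    by apply: lerD; apply: ler_wpM2l => //; rewrite /gm ge_min lexx orbT.
  by rewrite le_eqVlt; apply/orP; left; apply/eqP; ring.
Qed.

Lemma hh_concave j m1 m2 t : 0 <= t <= 1 ->
  t * hh j m1 + (1 - t) * hh j m2 <= hh j (t * m1 + (1 - t) * m2).
Proof.
case/andP=> t0 t1; have t1' : 0 <= 1 - t by rewrite subr_ge0.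
case: (hh_attained j (t * m1 + (1 - t) * m2)) => i Hi ->.
apply: (@le_trans _ _ (t * (p i + m1 * c i j) + (1 - t) * (p i + m2 * c i j))).
  by apply: lerD; apply: ler_wpM2l => //; exact: hh_le.
by rewrite le_eqVlt; apply/orP; left; apply/eqP; ring.
Qed.

Lemma GG_concave l1 l2 m1 m2 t : 0 <= t <= 1 ->
  t * GG l1 m1 + (1 - t) * GG l2 m2
    <= GG (t * l1 + (1 - t) * l2) (t * m1 + (1 - t) * m2).
Proof.
move=> Ht; have /andP[t0 t1] := Ht; have t1' : 0 <= 1 - t by rewrite subr_ge0.
rewrite /GG.
set S1 := \sum_(j in J) _.
set S2 := \sum_(j in J) _.
set S3 := \sum_(j in J) _.
suff : t * S1 + (1 - t) * S2 <= S3.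
  move=> H.
  have -> : t * (S1 - m1 * E + l1) + (1 - t) * (S2 - m2 * E + l2) =
    (t * S1 + (1 - t) * S2) - (t * m1 + (1 - t) * m2) * E + (t * l1 + (1 - t) * l2)
    by ring.
  by rewrite lerD2r lerD2r.
rewrite /S1 /S2 /S3 !mulr_sumr -big_split /=.
apply: ler_sum => j Hj.
apply: le_trans (gm_concave _ _ _ Ht) _.
apply: gm_mono.
have := hh_concave j m1 m2 Ht.
move=> H.
have -> : t * (hh j m1 - l1) + (1 - t) * (hh j m2 - l2) =
  (t * hh j m1 + (1 - t) * hh j m2) - (t * l1 + (1 - t) * l2) by ring.
by rewrite lerD2r.
Qed.


Definition col (x : 'I_N -> 'I_N -> R) j := \sum_(i in I) x i j.
Definition Pfeas (x : 'I_N -> 'I_N -> R) :=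
  (forall i j, 0 <= x i j) /\
  (forall i j, ~~ ((i \in I) && (j \in J)) -> x i j = 0) /\
  (forall j, j \in J -> Pl j <= col x j) /\
  (forall j, j \in J -> col x j <= Pu j) /\
  \sum_(j in J) col x j = 1.
Definition dsum (x w : 'I_N -> 'I_N -> R) := \sum_(i in I) \sum_(j in J) x i j * w i j.
Definition aobj x := dsum x (fun i _ => p i).
Definition bobj x := dsum x c.

Lemma ab_comb x mu :
  aobj x + mu * bobj x = \sum_(j in J) \sum_(i in I) x i j * (p i + mu * c i j).
Proof.
rewrite exchange_big /= /aobj /bobj /dsum mulr_sumr -big_split /=.
apply: eq_bigr => i _; rewrite mulr_sumr -big_split /=.
by apply: eq_bigr => j _; ring.
Qed.

Lemma weak_dual x l mu : Pfeas x -> GG l mu <= aobj x + mu * (bobj x - E).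
Proof.
case=> Hx0 [Hxz [HxL [HxU Hs1]]].
have H1 : \sum_(j in J) gm j (hh j mu - l) <= \sum_(j in J) col x j * (hh j mu - l).
  by apply: ler_sum => j Hj; apply: gm_ge; [exact: HxL | exact: HxU].
have H2 : \sum_(j in J) col x j * (hh j mu - l) = \sum_(j in J) col x j * hh j mu - l.
  under eq_bigr do rewrite mulrBr.
  by rewrite sumrB -mulr_suml Hs1 mul1r.
have H3 : \sum_(j in J) col x j * hh j mu <= aobj x + mu * bobj x.
  rewrite ab_comb; apply: ler_sum => j Hj; rewrite /col mulr_suml.
  by apply: ler_sum => i Hi; apply: ler_wpM2l => //; exact: hh_le.
rewrite /GG; rewrite mulrBr.
have := lerD H1 (lexx (- (mu * E) + l)).
rewrite H2 => H4.
apply: le_trans; first by rewrite -addrA; exact: H4.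
have -> : \sum_(j in J) col x j * hh j mu - l + (- (mu * E) + l) =
  \sum_(j in J) col x j * hh j mu - mu * E by ring.
have -> : aobj x + (mu * bobj x - mu * E) = (aobj x + mu * bobj x) - mu * E by ring.
by rewrite lerD2r.
Qed.

Definition mix t (x y : 'I_N -> 'I_N -> R) := fun i j => t * x i j + (1 - t) * y i j.

Lemma dsum_mix t x y w : dsum (mix t x y) w = t * dsum x w + (1 - t) * dsum y w.
Proof.
rewrite /dsum !mulr_sumr -big_split; apply: eq_bigr => i _ /=.
rewrite !mulr_sumr -big_split; apply: eq_bigr => j _ /=.
by rewrite /mix; ring.
Qed.

Lemma col_mix t x y j : col (mix t x y) j = t * col x j + (1 - t) * col y j.
Proof.
by rewrite /col !mulr_sumr -big_split; apply: eq_bigr => i _.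
Qed.

Lemma Pfeas_mix t x y : 0 <= t <= 1 -> Pfeas x -> Pfeas y -> Pfeas (mix t x y).
Proof.
case/andP=> t0 t1; have t1' : 0 <= 1 - t by rewrite subr_ge0.
case=> Hx0 [Hxz [HxL [HxU Hxs]]]; case=> Hy0 [Hyz [HyL [HyU Hys]]].
split; first by move=> i j; rewrite /mix addr_ge0 // mulr_ge0.
split; first by move=> i j H; rewrite /mix Hxz // Hyz // !mulr0 addr0.
split.
  move=> j Hj; rewrite col_mix.
  apply: le_trans (_ : t * Pl j + (1 - t) * Pl j <= _).
    by rewrite le_eqVlt; apply/orP; left; apply/eqP; ring.
  by apply: lerD; apply: ler_wpM2l => //; [exact: HxL | exact: HyL].
split.
  move=> j Hj; rewrite col_mix.
  apply: le_trans (_ : _ <= t * Pu j + (1 - t) * Pu j) _.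
    by apply: lerD; apply: ler_wpM2l => //; [exact: HxU | exact: HyU].
  by rewrite le_eqVlt; apply/orP; left; apply/eqP; ring.
under eq_bigr do rewrite col_mix.
by rewrite big_split /= -!mulr_sumr Hxs Hys; ring.
Qed.

Lemma inner mu : exists2 j0, j0 \in J &
  exists x, Pfeas x /\ GG (hh j0 mu) mu = aobj x + mu * (bobj x - E).
Proof.
have Hch : forall j, exists i, i \in I /\ hh j mu = p i + mu * c i j.
  by move=> j; case: (hh_attained j mu) => i Hi He; exists i.
have [sg Hsg] := choice Hch.
pose high (lam : R) := \sum_(j in J) (if lam < hh j mu then Pl j else Pu j).
pose low (lam : R) := \sum_(j in J) (if lam <= hh j mu then Pl j else Pu j).
have [jm Hjm Hjmax] := exists_argmax (fun j => hh j mu) HJ0.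
pose Jh := [set j in J | 1 <= high (hh j mu)].
have HJh : exists j, j \in Jh.
  exists jm; rewrite inE Hjm /=.
  by rewrite /high (eq_bigr (fun j => Pu j)) // => k Hk; rewrite ltNge Hjmax.
have [j0 Hj0 Hj0min] := exists_argmin (fun j => hh j mu) HJh.
move: Hj0; rewrite inE => /andP[Hj0J Hhi].
have Hlo : low (hh j0 mu) <= 1.
  pose Ls := [set k in J | hh k mu < hh j0 mu].
  case: (pselect (exists k, k \in Ls)) => [HL|HL].
    have [k1 Hk1 Hk1max] := exists_argmax (fun j => hh j mu) HL.
    move: Hk1; rewrite inE => /andP[Hk1J Hk1lt].
    have Hk1n : k1 \notin Jh.
      by apply/negP => Hin; have := Hj0min _ Hin; rewrite leNgt Hk1lt.
    have Hk1h : high (hh k1 mu) < 1 by move: Hk1n; rewrite inE Hk1J /= -ltNge.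
    suff -> : low (hh j0 mu) = high (hh k1 mu) by exact: ltW.
    apply: eq_bigr => k Hk.
    have -> : (hh j0 mu <= hh k mu) = (hh k1 mu < hh k mu); last by [].
    apply/idP/idP => H.
      exact: lt_le_trans Hk1lt H.
    rewrite leNgt; apply/negP => H2.
    have : k \in Ls by rewrite inE Hk H2.
    by move/Hk1max; rewrite leNgt H.
  rewrite /low (eq_bigr (fun j => Pl j)) // => k Hk.
  case: ifP => // /negbT; rewrite -ltNge => H; exfalso; apply: HL; exists k.
  by rewrite inE Hk H.
pose lo := low (hh j0 mu).
pose hi := high (hh j0 mu).
have Hlohi : lo <= hi.
  apply: ler_sum => k Hk.
  case: (leP (hh j0 mu) (hh k mu)) => H1.
    by case: (ltP (hh j0 mu) (hh k mu)) => H2.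
  by rewrite ltNge (ltW H1).
pose th := if hi == lo then 0 else (1 - lo) / (hi - lo).
have Hth : 0 <= th <= 1.
  rewrite /th; case: eqP => [_|Hne]; first by rewrite lexx ler01.
  have Hd : 0 < hi - lo.
    rewrite subr_gt0 lt_neqAle Hlohi andbT; apply/eqP => E'; apply: Hne; by rewrite E'.
  apply/andP; split; first by apply: divr_ge0; [rewrite subr_ge0 | exact: ltW].
  by rewrite ler_pdivrMr // mul1r lerD2r.
pose gh j := if hh j0 mu < hh j mu then Pl j else if hh j mu < hh j0 mu then Pu j
   else Pl j + th * (Pu j - Pl j).
have Hgh j : Pl j <= gh j <= Pu j.
  rewrite /gh; case: ifP => _; first by rewrite lexx HPlu.
  case: ifP => _; first by rewrite HPlu lexx.
  case/andP: Hth => h0 h1; have := HPlu j => H.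
  apply/andP; split; first by rewrite lerDl mulr_ge0 // subr_ge0.
  nra.
have Hsgh : \sum_(j in J) gh j = lo + th * (hi - lo).
  rewrite /lo /hi /low /high -sumrB mulr_sumr -big_split /=.
  apply: eq_bigr => k Hk; rewrite /gh.
  case: (ltP (hh j0 mu) (hh k mu)) => H1.
    by rewrite (ltW H1) subrr mulr0 addr0.
  case: (ltP (hh k mu) (hh j0 mu)) => H2.
    by rewrite subrr mulr0 addr0.
  by [].
have Hs1 : \sum_(j in J) gh j = 1.
  rewrite Hsgh /th; case: eqP => [He|Hne].
    have -> : lo = 1 by apply/le_anti; rewrite Hlo -He Hhi.
    by rewrite mul0r addr0.
  rewrite divfK; first by rewrite addrC subrK.
  by rewrite subr_eq0; apply/eqP.
pose x i j := if (j \in J) && (i == sg j) then gh j else 0.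
have Hcol j : j \in J -> col x j = gh j.
  move=> Hj; rewrite /col (bigD1 (sg j)) ?(proj1 (Hsg j)) //= /x Hj eqxx /=.
  by rewrite big1 ?addr0 // => i /andP[_ Hi]; rewrite (negbTE Hi).
have Hx : Pfeas x.
  split.
    move=> i j; rewrite /x; case: ifP => // /andP[Hj _].
    by have /andP[H _] := Hgh j; exact: le_trans (HPl0 j) H.
  split.
    move=> i j H; rewrite /x; case: ifP => // /andP[Hj /eqP Hi].
    by move: H; rewrite Hi (proj1 (Hsg j)) Hj.
  split.
    by move=> j Hj; rewrite Hcol //; case/andP: (Hgh j).
  split.
    by move=> j Hj; rewrite Hcol //; case/andP: (Hgh j).
  by rewrite (eq_bigr _ Hcol) Hs1.
exists j0 => //; exists x; split => //.
have Hab : aobj x + mu * bobj x = \sum_(j in J) gh j * hh j mu.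
  rewrite ab_comb; apply: eq_bigr => j Hj.
  rewrite (bigD1 (sg j)) ?(proj1 (Hsg j)) //= /x Hj eqxx /= big1 ?addr0.
    by rewrite (proj2 (Hsg j)).
  by move=> i /andP[_ Hi]; rewrite (negbTE Hi) mul0r.
have Hgm : forall j, j \in J -> gm j (hh j mu - hh j0 mu) = gh j * (hh j mu - hh j0 mu).
  move=> j Hj; rewrite /gh; case: (ltP (hh j0 mu) (hh j mu)) => H1.
    by rewrite gm_pos // subr_ge0 ltW.
  case: (ltP (hh j mu) (hh j0 mu)) => H2.
    by rewrite gm_neg // subr_le0 ltW.
  have -> : hh j mu - hh j0 mu = 0 by apply/eqP; rewrite subr_eq0 eq_le H1 H2.
  by rewrite /gm !mulr0 minxx.
rewrite /GG (eq_bigr _ Hgm).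
under eq_bigr do rewrite mulrBr.
rewrite sumrB -mulr_suml Hs1 mul1r mulrBr addrA Hab.
ring.
Qed.

Definition Kc := \sum_(i in I) \sum_(j in J) (if c i j == 0 then 0 else p j / c i j).
Definition dg (x : 'I_N -> 'I_N -> R) i j :=
  (if c i j == 0 then x i j else 0) +
  (if i == j then \sum_(k in I) (if c k j == 0 then 0 else x k j) else 0).

Lemma Kc_ge i j : i \in I -> j \in J -> c i j != 0 -> p j / c i j <= Kc.
Proof.
move=> Hi Hj Hc.
have Hnn : forall i j, 0 <= (if c i j == 0 then 0 else p j / c i j).
  by move=> i' j'; case: ifP => // _; exact: divr_ge0.
apply: le_trans (_ : _ <= \sum_(j' in J) (if c i j' == 0 then 0 else p j' / c i j')) _.
  by rewrite (bigD1 j) //= (negbTE Hc) lerDl sumr_ge0.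
rewrite /Kc [X in _ <= X](bigD1 i) //= lerDl sumr_ge0 // => k _.
exact: sumr_ge0.
Qed.

Lemma dg_prop x : Pfeas x ->
  Pfeas (dg x) /\ bobj (dg x) = 0 /\ aobj (dg x) <= aobj x + Kc * bobj x.
Proof.
case=> Hx0 [Hxz [HxL [HxU Hxs]]].
have Hcol : forall j, j \in J -> col (dg x) j = col x j.
  move=> j Hj; rewrite /col /dg big_split /=.
  rewrite [X in _ + X](bigD1 j (HJI Hj)) /= eqxx [X in _ + (_ + X)]big1; last first.
    by move=> i /andP[_ /negbTE ->].
  rewrite addr0 -big_split /=; apply: eq_bigr => i _.
  by case: eqP => _; rewrite ?addr0 ?add0r.
split.
  split.
    move=> i j; rewrite /dg; apply: addr_ge0.
      by case: ifP.
    by case: ifP => // _; apply: sumr_ge0 => k _; case: ifP.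
  split.
    move=> i j H; rewrite /dg Hxz // if_same add0r.
    case: eqP => [Eij|_] //; subst i.
    have Hj : j \notin J by apply/negP => Hj; move: H; rewrite Hj (HJI Hj).
    by rewrite big1 // => k _; rewrite Hxz ?if_same // (negbTE Hj) andbF.
  split; first by move=> j Hj; rewrite Hcol //; exact: HxL.
  split; first by move=> j Hj; rewrite Hcol //; exact: HxU.
  by rewrite (eq_bigr _ Hcol) Hxs.
split.
  rewrite /bobj /dsum big1 // => i Hi; rewrite big1 // => j Hj.
  rewrite /dg mulrDl.
  have -> : (if c i j == 0 then x i j else 0) * c i j = 0.
    by case: eqP => [->|_]; rewrite ?mulr0 ?mul0r.
  by case: eqP => [->|_]; rewrite ?Hcd ?mulr0 ?mul0r ?addr0.
have E1 : aobj (dg x) =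
  \sum_(i in I) \sum_(j in J) ((if c i j == 0 then x i j * p i else 0) +
                               (if c i j == 0 then 0 else x i j * p j)).
  have -> : aobj (dg x) =
    \sum_(i in I) \sum_(j in J) (if c i j == 0 then x i j * p i else 0) +
    \sum_(i in I) \sum_(j in J)
      ((if i == j then \sum_(k in I) (if c k j == 0 then 0 else x k j) else 0) * p i).
    rewrite /aobj /dsum -big_split; apply: eq_bigr => i _.
    rewrite -big_split; apply: eq_bigr => j _; rewrite /dg mulrDl.
    by case: ifP; rewrite ?mul0r.
  rewrite [X in _ + X = _]exchange_big /=.
  have -> : \sum_(j in J) \sum_(i in I)
      ((if i == j then \sum_(k in I) (if c k j == 0 then 0 else x k j) else 0) * p i)
    = \sum_(j in J) \sum_(k in I) (if c k j == 0 then 0 else x k j * p j).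
    apply: eq_bigr => j Hj.
    transitivity ((\sum_(k in I) (if c k j == 0 then 0 else x k j)) * p j).
      rewrite (bigD1 j (HJI Hj) (F := fun i => (if i == j then
         \sum_(k in I) (if c k j == 0 then 0 else x k j) else 0) * p i)) /= eqxx.
      by rewrite [X in _ + X]big1 ?addr0 // => i /andP[_ /negbTE ->]; rewrite mul0r.
    rewrite mulr_suml; apply: eq_bigr => k _.
    by case: ifP; rewrite ?mul0r.
  rewrite [X in _ + X = _]exchange_big /= -big_split /=.
  by apply: eq_bigr => i _; rewrite -big_split.
rewrite E1 /aobj /bobj /dsum mulr_sumr -big_split /=.
apply: ler_sum => i Hi; rewrite mulr_sumr -big_split /=.
apply: ler_sum => j Hj.
case: eqP => [Hc|Hc] /=.
  by rewrite Hc !mulr0 !addr0.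
rewrite add0r.
have -> : x i j * p j = (x i j * c i j) * (p j / c i j).
  by field; apply/eqP.
apply: le_trans (_ : _ <= Kc * (x i j * c i j)) _.
  rewrite [X in _ <= X]mulrC; apply: ler_wpM2l; first exact: mulr_ge0.
  by apply: Kc_ge => //; apply/eqP.
by rewrite lerDr mulr_ge0.
Qed.

Lemma Pfeas_le1 x i j : Pfeas x -> x i j <= 1.
Proof.
case=> Hx0 [Hxz [_ [_ Hxs]]].
case: (boolP ((i \in I) && (j \in J))) => [/andP[Hi Hj]|H]; last by rewrite Hxz.
apply: (@le_trans _ _ (col x j)).
  by rewrite /col (bigD1 i) //= lerDl sumr_ge0.
rewrite -Hxs (bigD1 j) //= lerDl sumr_ge0 // => k _.
exact: sumr_ge0.
Qed.

Definition vecx (v : 'rV[R]_(N * N)) : 'I_N -> 'I_N -> R :=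
  fun i j => v ord0 (mxvec_index i j).

Lemma vecx_mxvec (x : 'I_N -> 'I_N -> R) : vecx (mxvec (\matrix_(i, j) x i j)) = x.
Proof. by apply/funext => i; apply/funext => j; rewrite /vecx mxvecE mxE. Qed.

Lemma vecx_cont i j : continuous (fun v : 'rV[R]_(N * N) => vecx v i j).
Proof. exact: coord_continuous. Qed.

Lemma cont_sum (T : topologicalType) (Ix : Type) (r : seq Ix) (P : pred Ix)
  (F : Ix -> T -> R) :
  (forall i, continuous (F i)) -> continuous (fun v => \sum_(i <- r | P i) F i v).
Proof.
move=> HF; elim: r => [|y r IH].
  by under eq_fun do rewrite big_nil; exact: cst_continuous.
under eq_fun do rewrite big_cons.
case: (P y) => //.
move=> v; apply: (@continuousD _ _ _ (F y) (fun v => \sum_(j <- r | P j) F j v)).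
  exact: HF.
exact: IH.
Qed.

Lemma cont_mulc (T : topologicalType) (g : T -> R) (k : R) :
  continuous g -> continuous (fun v => g v * k).
Proof.
move=> cg v; apply: (@continuousM _ _ g (fun _ => k)); first exact: cg.
exact: cst_continuous.
Qed.

Lemma closed_all (T : topologicalType) (Ix : Type) (S : Ix -> set T) :
  (forall i, closed (S i)) -> closed [set v | forall i, S i v].
Proof.
move=> HS.
have -> : [set v | forall i, S i v] = \bigcap_(i in setT) S i.
  by apply/seteqP; split => v /= H i //; apply: H.
exact: closed_bigI.
Qed.

Lemma closed_imp (T : topologicalType) (Q : Prop) (S : set T) :
  closed S -> closed [set v | Q -> S v].
Proof.
move=> HS; case: (pselect Q) => HQ.
  have -> : [set v | Q -> S v] = S.
    by apply/seteqP; split => v /= H; [exact: H | move=> _].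
  exact: HS.
have -> : [set v | Q -> S v] = setT.
  by apply/seteqP; split => v //= _ HQ'; exfalso; exact: HQ.
exact: closedT.
Qed.

Lemma closed_le_fun (T : topologicalType) (g : T -> R) r :
  continuous g -> closed [set v | g v <= r].
Proof. by move=> cg; exact: (proj1 (continuous_closedP g) cg _ (@closed_le _ r)). Qed.

Lemma closed_ge_fun (T : topologicalType) (g : T -> R) r :
  continuous g -> closed [set v | r <= g v].
Proof. by move=> cg; exact: (proj1 (continuous_closedP g) cg _ (@closed_ge _ r)). Qed.

Lemma closed_eq_fun (T : topologicalType) (g : T -> R) r :
  continuous g -> closed [set v | g v = r].
Proof. by move=> cg; exact: (proj1 (continuous_closedP g) cg _ (@closed_eq _ r)). Qed.

Lemma col_cont j : continuous (fun v => col (vecx v) j).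
Proof. by apply: cont_sum => i; exact: vecx_cont. Qed.

Lemma dsum_cont w : continuous (fun v => dsum (vecx v) w).
Proof.
apply: cont_sum => i; apply: cont_sum => j.
by apply: cont_mulc; exact: vecx_cont.
Qed.

Lemma exists_opt : exists xs, (Pfeas xs /\ bobj xs <= E) /\
  forall x, Pfeas x -> bobj x <= E -> aobj xs <= aobj x.
Proof.
pose A := [set v : 'rV[R]_(N * N) | Pfeas (vecx v) /\ bobj (vecx v) <= E].
have A0 : A !=set0.
  case: (inner 0) => j0 _ [x0 [Hx0 _]].
  have [Hd [Hdb _]] := dg_prop Hx0.
  exists (mxvec (\matrix_(i, j) dg x0 i j)); rewrite /A /= vecx_mxvec.
  by split => //; rewrite Hdb.
have Acl : closed A.
  apply: closedI.
    apply: closedI.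
      apply: closed_all => i; apply: closed_all => j.
      exact: closed_ge_fun (@vecx_cont i j).
    apply: closedI.
      apply: closed_all => i; apply: closed_all => j; apply: closed_imp.
      exact: closed_eq_fun (@vecx_cont i j).
    apply: closedI.
      apply: closed_all => j; apply: closed_imp.
      exact: closed_ge_fun (@col_cont j).
    apply: closedI.
      apply: closed_all => j; apply: closed_imp.
      exact: closed_le_fun (@col_cont j).
    apply: closed_eq_fun.
    by apply: cont_sum => j; exact: col_cont.
  exact: closed_le_fun (@dsum_cont c).
have Mnco : compact [set v : 'rV[R]_(N * N) | forall k, v ord0 k \in `[(0:R), 1]].
  apply: (@rV_compact _ _ (fun=> `[(0:R), 1]%classic)).
  by move=> _; apply: segment_compact.
have Acp : compact A.
  apply: (subclosed_compact Acl Mnco).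
  move=> v [Hv _] k; case/mxvec_indexP: k => i j /=.
  rewrite in_itv /=; apply/andP; split.
    by case: Hv => H _; exact: H.
  exact: (Pfeas_le1 i j Hv).
have [v Hv Hmin] := @EVT_min_rV R (N * N) (fun v => aobj (vecx v)) A A0 Acp
  (continuous_subspaceT (@dsum_cont (fun i _ => p i))).
exists (vecx v); split; first by move/set_mem: Hv.
move=> x Hx Hb.
have := Hmin (mxvec (\matrix_(i, j) x i j)); rewrite vecx_mxvec; apply.
by apply: mem_set; rewrite /A /= vecx_mxvec.
Qed.

Lemma bnd_ratio xs x : Pfeas x -> E < bobj x ->
  (forall y, Pfeas y -> bobj y <= E -> aobj xs <= aobj y) ->
  aobj xs - aobj x <= Kc * (bobj x - E).
Proof.
move=> Hx Hb Hopt.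
have [Hd [Hdb Hda]] := dg_prop Hx.
have b0 : 0 < bobj x by exact: le_lt_trans HE Hb.
pose t := E / bobj x.
have Htb : t * bobj x = E by rewrite /t divfK // gt_eqF.
have Ht : 0 <= t <= 1.
  apply/andP; split; first by rewrite /t divr_ge0 // ltW.
  by rewrite /t ler_pdivrMr // mul1r ltW.
have Hy := Pfeas_mix Ht Hx Hd.
have Hyb : bobj (mix t x (dg x)) <= E.
  by rewrite /bobj dsum_mix -/(bobj x) -/(bobj (dg x)) Hdb mulr0 addr0 Htb.
have := Hopt _ Hy Hyb.
rewrite /aobj dsum_mix -/(aobj x) -/(aobj (dg x)) => H.
case/andP: Ht => t0 t1; have t1' : 0 <= 1 - t by rewrite subr_ge0.
have H2 : t * aobj x + (1 - t) * aobj (dg x) <= t * aobj x + (1 - t) * (aobj x + Kc * bobj x).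
  by rewrite lerD2l ler_wpM2l.
have H3 : t * aobj x + (1 - t) * (aobj x + Kc * bobj x) = aobj x + Kc * (bobj x - E).
  by rewrite -Htb; ring.
rewrite lerBlDl; apply: le_trans H _; rewrite -H3; exact: H2.
Qed.

Lemma key xs : Pfeas xs -> bobj xs <= E ->
  (forall x, Pfeas x -> bobj x <= E -> aobj xs <= aobj x) ->
  exists2 mu0, 0 <= mu0 & forall x, Pfeas x -> aobj xs <= aobj x + mu0 * (bobj x - E).
Proof.
move=> Hxs Hxsb Hopt.
pose T := [set r | exists x, Pfeas x /\ E < bobj x /\ r = (aobj xs - aobj x) / (bobj x - E)].
have HTub : forall r, T r -> r <= Kc.
  move=> _ [x [Hx [Hb ->]]].
  by rewrite ler_pdivrMr ?subr_gt0 //; exact: (bnd_ratio Hx Hb Hopt).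
pose mu0 := Num.max 0 (sup T).
have mu00 : 0 <= mu0 by rewrite /mu0 le_max lexx.
exists mu0 => // x Hx.
case: (ltP E (bobj x)) => Hb.
  have Tr : T ((aobj xs - aobj x) / (bobj x - E)) by exists x.
  have HTs : has_sup T by split; [exists ((aobj xs - aobj x) / (bobj x - E)) | exists Kc].
  have Hr : (aobj xs - aobj x) / (bobj x - E) <= mu0.
    apply: le_trans (sup_upper_bound HTs Tr) _.
    by rewrite /mu0 le_max lexx orbT.
  move: Hr; rewrite ler_pdivrMr ?subr_gt0 // => Hr.
  by rewrite -lerBlDl.
have Ha := Hopt _ Hx Hb.
case: (leP (sup T) 0) => Hs.
  by rewrite /mu0 max_l // mul0r addr0.
have -> : mu0 = sup T by rewrite /mu0 max_r // ltW.
have HTn : T !=set0.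
  case: (pselect (T !=set0)) => // HT; exfalso.
  have HT0 : T = set0 by apply/seteqP; split => // r Tr; apply: HT; exists r.
  by move: Hs; rewrite HT0 sup0 ltxx.
have HTs : has_sup T by split => //; exists Kc.
suff H : sup T * (E - bobj x) <= aobj x - aobj xs.
  have -> : aobj x + sup T * (bobj x - E) = aobj x - sup T * (E - bobj x) by ring.
  by rewrite lerBrDr -lerBrDl.
have D0 : 0 <= E - bobj x by rewrite subr_ge0.
apply/ler_addgt0Pr => e He.
pose d := e / (E - bobj x + 1).
have Hd1 : 0 < E - bobj x + 1 by rewrite ltr_wpDl.
have Hd : 0 < d by rewrite /d divr_gt0.
have [r [x' [Hx' [Hb' ->]]] Hr] := sup_adherent Hd HTs.
set a := aobj x; set b := bobj x; set a' := aobj x'; set b' := bobj x'; set ax := aobj xs.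
have Hbb : 0 < b' - b by rewrite subr_gt0; exact: le_lt_trans Hb Hb'.
have Hb'E : 0 < b' - E by rewrite subr_gt0.
pose s := (b' - E) / (b' - b).
have Hs1 : s * (b' - b) = b' - E by rewrite /s divfK // gt_eqF.
have Hsr : 0 <= s <= 1.
  apply/andP; split; first by rewrite /s divr_ge0 // ltW.
  by rewrite /s ler_pdivrMr // mul1r lerD2l lerN2.
have Hy := Pfeas_mix Hsr Hx Hx'.
have Hyb : bobj (mix s x x') <= E.
  rewrite /bobj dsum_mix -/(bobj x) -/(bobj x') -/b -/b'.
  have -> : s * b + (1 - s) * b' = b' - s * (b' - b) by ring.
  by rewrite Hs1 opprB addrC subrK.
have := Hopt _ Hy Hyb.
rewrite /aobj dsum_mix -/(aobj x) -/(aobj x') -/a -/a' -/(aobj xs) -/ax => H1.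
set r0 := (ax - a') / (b' - E).
have Hr0 : r0 * (b' - E) = ax - a' by rewrite /r0 divfK // gt_eqF.
have K1 : (b' - b) * ax <= (b' - b) * (s * a + (1 - s) * a') by rewrite ler_wpM2l // ltW.
have K2 : (b' - b) * (s * a + (1 - s) * a') = (b' - E) * a + (E - b) * a'.
  have -> : (b' - b) * (s * a + (1 - s) * a') = (s * (b' - b)) * a + ((b' - b) - s * (b' - b)) * a'
    by ring.
  by rewrite Hs1; ring.
have K3 : (b' - E) * (r0 * (E - b)) <= (b' - E) * (a - ax).
  have -> : (b' - E) * (r0 * (E - b)) = (E - b) * (ax - a') by rewrite -Hr0; ring.
  rewrite K2 in K1; nra.
have K4 : r0 * (E - b) <= a - ax by rewrite -(ler_pM2l Hb'E).
have K5 : d * (E - b) <= e.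
  rewrite /d mulrAC -mulrA ler_piMr ?ltW //.
  by rewrite -/b ltr_pdivrMr // mul1r ltrDl ltr01.
have K6 : sup T * (E - b) <= (r0 + d) * (E - b).
  by rewrite ler_wpM2r // -lerBlDr ltW.
apply: le_trans K6 _; rewrite mulrDl; exact: lerD K4 K5.
Qed.

Theorem abs_main :
  (forall l1 l2 m1 m2 t, 0 <= m1 -> 0 <= m2 -> 0 <= t <= 1 ->
     t * GG l1 m1 + (1 - t) * GG l2 m2
       <= GG (t * l1 + (1 - t) * l2) (t * m1 + (1 - t) * m2))
  /\
  (exists lam0 mu0, 0 <= mu0 /\
     (forall l mu, 0 <= mu -> GG l mu <= GG lam0 mu0) /\
     exists xs, (Pfeas xs /\ bobj xs <= E) /\
       (forall x, Pfeas x -> bobj x <= E -> aobj xs <= aobj x) /\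
       aobj xs = GG lam0 mu0)
  /\
  (forall mu, 0 <= mu ->
     exists2 j, j \in J &
       (forall l, GG l mu <= GG (hh j mu) mu) /\
       (forall j', j' \in J -> GG (hh j' mu) mu <= GG (hh j mu) mu)).
Proof.
split; first by move=> l1 l2 m1 m2 t _ _ Ht; exact: GG_concave.
split.
  have [xs [[Hxs Hxsb] Hopt]] := exists_opt.
  have [mu0 mu00 Hkey] := key Hxs Hxsb Hopt.
  have [j0 Hj0 [xh [Hxh Heq]]] := inner mu0.
  have Hup : forall l mu, 0 <= mu -> GG l mu <= aobj xs.
    move=> l mu Hmu; apply: le_trans (weak_dual l mu Hxs) _.
    by rewrite gerDl mulr_ge0_le0 // subr_le0.
  have Heq2 : aobj xs = GG (hh j0 mu0) mu0.
    apply/le_anti/andP; split; last exact: Hup.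
    by rewrite Heq; exact: Hkey.
  exists (hh j0 mu0), mu0; split => //; split.
    by move=> l mu Hmu; rewrite -Heq2; exact: Hup.
  by exists xs.
move=> mu Hmu.
have [j0 Hj0 [xh [Hxh Heq]]] := inner mu.
have [js Hjs Hmax] := exists_argmax (fun j => GG (hh j mu) mu) HJ0.
exists js => //; split => //.
move=> l; apply: le_trans (Hmax _ Hj0).
by rewrite Heq; exact: weak_dual.
Qed.

End Abs.


Unset Implicit Arguments.
Set Strict Implicit.

Theorem theorem4 (R : realType) (n N m : nat) (s eps : R)
  (f : 'I_m -> 'rV[R]_n -> 'rV[R]_n) (W : set 'rV[R]_n)
  (Qs : 'I_N -> set 'rV[R]_n) (X : set 'rV[R]_n) (u : 'I_N)
  (Pl Pu : 'I_N -> 'I_m -> 'I_N -> R) (p : 'I_N -> R)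
  (q : 'I_N) (a : 'I_m) :
  (1 <= n)%N -> 1 <= s -> 0 <= eps ->
  (forall b, continuous (f b)) ->
  (* the abstraction: Q = Q_safe U {q_u}, pairwise disjoint, Q_safe covers the
     bounded set X, q_u = R^n \ X *)
  bounded_set X ->
  Qs u = ~` X ->
  (forall i j, i != j -> Qs i `&` Qs j = set0) ->
  (forall x, exists i, Qs i x) ->
  (* interval bounds *)
  (forall q1 b q2, 0 <= Pl q1 b q2 <= Pu q1 b q2 /\ Pu q1 b q2 <= 1) ->
  (forall q1 b, \sum_(q2 < N) Pl q1 b q2 <= 1 /\ 1 <= \sum_(q2 < N) Pu q1 b q2) ->
  (forall b, Pl u b u = 1 /\ Pu u b u = 1) ->
  (* nominal distribution supported in W *)
  (forall q1 b, Nbar Pu q1 b \subset NbarW Qs f W q1 b) ->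
  (* underline p^k >= 0 *)
  (forall i, 0 <= p i) ->
  let G := Gfun Qs f W s eps Pl Pu p q a in
  let h := hfun Qs s p (NbarW Qs f W q a) in
  let J := Nbar Pu q a in
  (* G is concave on R x [0, +oo) *)
  (forall l1 l2 m1 m2 t, 0 <= m1 -> 0 <= m2 -> 0 <= t <= 1 ->
     t * G l1 m1 + (1 - t) * G l2 m2
       <= G (t * l1 + (1 - t) * l2) (t * m1 + (1 - t) * m2))
  /\
  (* max_{mu >= 0, lambda} G is attained and equals the optimal value of (LP) *)
  (exists lam0 mu0, 0 <= mu0 /\
     (forall l mu, 0 <= mu -> G l mu <= G lam0 mu0) /\
     exists gam gamh pi,
       LPfeasible Qs f W s eps Pl Pu q a gam gamh pi /\
       (forall gam' gamh' pi', LPfeasible Qs f W s eps Pl Pu q a gam' gamh' pi' ->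
          LPobj Qs f W p q a gam <= LPobj Qs f W p q a gam') /\
       LPobj Qs f W p q a gam = G lam0 mu0)
  /\
  (* for every mu >= 0: max_lambda G(lambda, mu) = max_{j in J} G(h_j(mu), mu) *)
  (forall mu, 0 <= mu ->
     exists2 j, j \in J &
       (forall l, G l mu <= G (h j mu) mu) /\
       (forall j', j' \in J -> G (h j' mu) mu <= G (h j mu) mu)).
Proof.
move=> n1 s1 eps0 _ _ _ _ _ Hb Hs Hu HNW Hp0 G h J.
pose I := NbarW Qs f W q a.
pose c := fun i j => setcost s (Qs i) (Qs j).
pose E := eps `^ s.
have HJI : {subset J <= I} by move=> x; exact: (fintype.subsetP (HNW q a) x).
have HPl0 : forall j, 0 <= Pl q a j by move=> j; case: (Hb q a j) => /andP[] .
have HPlu : forall j, Pl q a j <= Pu q a j by move=> j; case: (Hb q a j) => /andP[].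
have HPu0 : forall j, 0 <= Pu q a j by move=> j; exact: le_trans (HPl0 j) (HPlu j).
have HPuJ : \sum_(j in J) Pu q a j = \sum_(q2 < N) Pu q a q2.
  rewrite big_mkcond; apply: eq_bigr => j _.
  case: ifP => // HjJ; apply/esym/le_anti; rewrite HPu0 andbT.
  by move: HjJ; rewrite /J /Nbar inE => /negbT; rewrite -leNgt.
have HJ0 : exists j0, j0 \in J.
  case: (pselect (exists j0, j0 \in J)) => // HJn; exfalso.
  have : \sum_(j in J) Pu q a j <= 0.
    by apply: sumr_le0 => j Hj; exfalso; apply: HJn; exists j.
  by rewrite HPuJ; case: (Hs q a) => _ H1 H0; have := le_trans H1 H0; rewrite ler10.
have Hc0 : forall i j, 0 <= c i j by move=> i j; exact: setcost_ge0.
have Hcd : forall j, c j j = 0.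
  by move=> j; apply: setcost_diag; rewrite gt_eqF // (lt_le_trans ltr01 s1).
have HsPl : \sum_(j in J) Pl q a j <= 1.
  apply: le_trans (proj1 (Hs q a)); rewrite big_mkcond; apply: ler_sum => j _.
  by case: ifP.
have HsPu : 1 <= \sum_(j in J) Pu q a j by rewrite HPuJ; case: (Hs q a).
have HE : 0 <= E by exact: powR_ge0.
have [P1 [P2 P3]] := abs_main HJI HJ0 Hc0 Hcd Hp0 HPl0 HPlu HsPl HsPu HE.
split; first exact: P1.
split; last exact: P3.
case: P2 => lam0 [mu0 [mu00 [Hmax [xs [[Hxs Hxsb] [Hopt Heq]]]]]].
exists lam0, mu0; split => //; split; first exact: Hmax.
have Hobj : forall x : 'I_N -> 'I_N -> R,
    LPobj Qs f W p q a (fun i => \sum_(j in J) x i j) = aobj I J p x.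
  move=> x; rewrite /LPobj /aobj /dsum; apply: eq_bigr => i _.
  by rewrite mulr_suml.
case: (Hxs) => Hx0 [Hxz [HxL [HxU Hxs1]]].
exists (fun i => \sum_(j in J) xs i j), (col I xs), xs.
split.
  split; first by move=> j Hj; apply/andP; split; [exact: HxL | exact: HxU].
  split; first exact: Hxs1.
  split; first by move=> i j _ _; exact: Hx0.
  split; first by [].
  split; first by [].
  exact: Hxsb.
split; last by rewrite Hobj.
move=> gam' gamh' pi' [H1 [H2 [H3 [H4 [H5 H6]]]]].
pose pi2 := fun i j => if (i \in I) && (j \in J) then pi' i j else 0.
have Hcol2 : forall j, j \in J -> col I pi2 j = gamh' j.
  move=> j Hj; rewrite -(H4 j Hj) /col; apply: eq_bigr => i Hi.
  by rewrite /pi2 Hi Hj.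
have Hp2 : Pfeas I J (Pl q a) (Pu q a) pi2.
  split.
    move=> i j; rewrite /pi2; case: ifP => // /andP[Hi Hj]; exact: H3.
  split; first by move=> i j /negbTE H; rewrite /pi2 H.
  split; first by move=> j Hj; rewrite Hcol2 //; case/andP: (H1 j Hj).
  split; first by move=> j Hj; rewrite Hcol2 //; case/andP: (H1 j Hj).
  by rewrite (eq_bigr _ Hcol2).
have Hdsum2 : forall w, dsum I J pi2 w = \sum_(i in I) \sum_(j in J) pi' i j * w i j.
  move=> w; apply: eq_bigr => i Hi; apply: eq_bigr => j Hj.
  by rewrite /pi2 Hi Hj.
have Hb2 : bobj I J c pi2 <= E by rewrite /bobj Hdsum2.
have Ha2 : aobj I J p pi2 = LPobj Qs f W p q a gam'.
  rewrite /aobj Hdsum2 /LPobj; apply: eq_bigr => i Hi.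
  by rewrite -(H5 i Hi) mulr_suml.
rewrite Hobj -Ha2; exact: Hopt.
Qed.
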